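(* The sublinear perceptron takes $O( \varepsilon^{-2}\log n )$ iterations, with a total running time of $ {O}( \varepsilon^{-2}(n +d)\log n )$.
   Context: The sublinear perceptron is the following algorithm. Input: $\varepsilon>0$ and a matrix $A \in \mathbb{R}^{n \times d}$ whose rows $A_i$ all lie in the Euclidean unit ball $\mathbb{B}\subset\mathbb{R}^d$ (entries $A_{i,j}$ are assumed retrievable in constant time). Set $T \gets 200^2 \varepsilon^{-2}\log n$, $y_1 \gets 0$, $w_1 \gets \mathbf{1}_n$ (the all-ones $n$-vector), $\eta\gets \frac{1}{100} \sqrt{\frac{\log n}{T}}$. For $t=1,\dots,T$: let $p_t \gets w_t/\|w_t\|_1$ and $x_t \gets y_t/\max\{1,\|y_t\|\}$; choose $i_t\in[n]$ with probability $p_t(i)$; set $y_{t+1} \gets y_t + \frac{1}{\sqrt{2T}} A_{i_t}$; choose $j_t\in[d]$ with probability $x_t(j)^2/\|x_t\|^2$; for each $i\in[n]$ set $\tilde v_t(i) \gets A_i(j_t)\|x_t\|^2/x_t(j_t)$, $v_t(i) \gets \mathrm{clip}(\tilde v_t(i), 1/\eta)$ where $\mathrm{clip}(z,V)=\min\{V,\max\{-V,z\}\}$, and $w_{t+1}(i) \gets w_t(i)(1-\eta v_t(i)+\eta^2 v_t(i)^2)$. Return $\bar{x} = \frac{1}{T}\sum_t x_t$. *)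

(* Defs.v *)
From HB Require Import structures.
From mathcomp Require Import all_boot all_order all_algebra.
From mathcomp Require Import reals exp.
Set Implicit Arguments. Unset Strict Implicit. Unset Printing Implicit Defensive.
Import Order.TTheory GRing.Theory Num.Theory.
Local Open Scope ring_scope.

(* Unit-cost RAM model: a computation returns its value together with *)
(* the number of elementary operations (arithmetic operation on reals, *)
(* sqrt/ln, comparison, entry read/write) it performed.                *)
Definition M (A : Type) := (A * nat)%type.
Definition ret {A : Type} (a : A) : M A := (a, 0%N).
Definition tick {A : Type} (a : A) : M A := (a, 1%N).
Definition bind {A B : Type} (m : M A) (f : A -> M B) : M B :=
  let: (b, c') := f m.1 in (b, (m.2 + c')%N).

Fixpoint loop_from {S : Type} (k i0 : nat) (body : nat -> S -> M S) (s : S) : M S :=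
  match k with
  | 0 => ret s
  | k'.+1 => bind (body i0 s) (loop_from k' i0.+1 body)
  end.
Definition loop {S : Type} (k : nat) (body : nat -> S -> M S) (s : S) : M S :=
  loop_from k 0 body s.

Section Perceptron.
Variable R : realType.

(* vectors are stored as functions nat -> R (arrays); a write costs one op *)
Definition upd (v : nat -> R) (k : nat) (a : R) : nat -> R :=
  fun j => if j == k then a else v j.

(* constant-time access to A_{i,j} (0 outside the index range) *)
Definition entry (n d : nat) (A : 'M[R]_(n, d)) (i j : nat) : R :=
  match @insub _ (fun k => (k < n)%N) 'I_n i, @insub _ (fun k => (k < d)%N) 'I_d j with
  | Some i', Some j' => A i' j'
  | _, _ => 0
  end.

Definition clip (z V : R) : R := Num.min V (Num.max (- V) z).

(* Sampling an index in [0,k) with probability q i / tot, from a uniform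
   sample u in [0,1), by a linear scan of the cumulative weights. *)
Definition sample (k : nat) (q : nat -> R) (tot u : R) : M nat :=
  bind (loop k (fun i (st : R * option nat) =>
          let acc := st.1 + q i in
          tick (acc, match st.2 with
                     | Some _ => st.2
                     | None => if u * tot < acc then Some i else None
                     end)) (0, None))
       (fun st => ret (odflt k.-1 st.2)).

Definition Tn (n : nat) (eps : R) : nat :=
  `|Num.ceil (200%:R ^+ 2 / eps ^+ 2 * ln (n%:R : R))|%N.
Definition eta_of (n : nat) (eps : R) : R :=
  100%:R^-1 * Num.sqrt (ln (n%:R : R) / (Tn n eps)%:R).

(* one iteration t; state (w_t, y_t, s_t) with s_t = sum_{t'<t} x_t' *)
Definition step (n d : nat) (A : 'M[R]_(n, d)) (T : nat) (eta u1 u2 : R)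
  (st : (nat -> R) * (nat -> R) * (nat -> R)) :
  M ((nat -> R) * (nat -> R) * (nat -> R)) :=
  let: (w, y, s) := st in
  bind (loop n (fun i acc => tick (acc + w i)) 0) (fun W =>
  bind (sample n w W u1) (fun it =>
  bind (loop d (fun j acc => tick (acc + y j ^+ 2)) 0) (fun ny2 =>
  bind (tick (Num.max 1 (Num.sqrt ny2))) (fun m =>
  bind (loop d (fun j x => tick (upd x j (y j / m))) (fun _ => 0)) (fun x =>
  bind (loop d (fun j s' => tick (upd s' j (s' j + x j))) s) (fun s' =>
  bind (loop d (fun j y' => tick (upd y' j (y' j + entry A it j / Num.sqrt (2 * T%:R))))
             y) (fun y' =>
  bind (loop d (fun j acc => tick (acc + x j ^+ 2)) 0) (fun nx2 =>
  bind (sample d (fun j => x j ^+ 2) nx2 u2) (fun jt =>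
  bind (loop n (fun i w' =>
          let vt := entry A i jt * nx2 / x jt in
          let v := clip vt eta^-1 in
          tick (upd w' i (w' i * (1 - eta * v + eta ^+ 2 * v ^+ 2)))) w) (fun w' =>
  ret (w', y', s'))))))))))).

(* The sublinear perceptron; u1 t, u2 t are the uniform [0,1) random samples
   used at iteration t.  Returns xbar together with the operation count. *)
Definition perceptron (n d : nat) (A : 'M[R]_(n, d)) (eps : R) (u1 u2 : nat -> R)
  : M (nat -> R) :=
  let T := Tn n eps in
  let eta := eta_of n eps in
  bind (tick tt) (fun _ =>                                  (* compute T, eta *)
  bind (loop n (fun i w => tick (upd w i 1)) (fun _ => 0)) (fun w0 =>
  bind (loop d (fun j y => tick (upd y j 0)) (fun _ => 0)) (fun y0 =>
  bind (loop d (fun j s => tick (upd s j 0)) (fun _ => 0)) (fun s0 =>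
  bind (loop T (fun t st => step A T eta (u1 t) (u2 t) st) (w0, y0, s0)) (fun st =>
  loop d (fun j xb => tick (upd xb j (st.2 j / T%:R))) (fun _ => 0)))))).

Definition iterations (n : nat) (eps : R) : nat := Tn n eps.

Definition running_time (n d : nat) (A : 'M[R]_(n, d)) (eps : R) (u1 u2 : nat -> R) : nat :=
  (perceptron A eps u1 u2).2.

End Perceptron.

(* Main.v *)
Require Import Defs.
From HB Require Import structures.
From mathcomp Require Import all_boot all_order all_algebra.
From mathcomp Require Import reals exp.
From mathcomp Require Import zify ring lra.
Import Order.TTheory GRing.Theory Num.Theory.
Local Open Scope ring_scope.
Lemma cost_bind (A B : Type) (m : M A) (f : A -> M B) :
  (bind m f).2 = (m.2 + (f m.1).2)%N.
Proof. by rewrite /bind; case: (f m.1). Qed.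

Lemma cost_loop_from (S : Type) k i0 (body : nat -> S -> M S) s c :
  (forall i s, (body i s).2 = c) -> (loop_from k i0 body s).2 = (k * c)%N.
Proof.
move=> H; elim: k i0 s => [|k IH] i0 s //=.
by rewrite cost_bind IH H mulSn.
Qed.

Lemma cost_loop (S : Type) k (body : nat -> S -> M S) s c :
  (forall i s, (body i s).2 = c) -> (loop k body s).2 = (k * c)%N.
Proof. exact: cost_loop_from. Qed.

Lemma cost_sample (R : realType) k (q : nat -> R) tot u : (sample k q tot u).2 = k.
Proof. by rewrite /sample cost_bind (@cost_loop _ _ _ _ 1%N) // muln1 addn0. Qed.

Lemma cost_step (R : realType) n d (A : 'M[R]_(n, d)) T eta u1 u2 st :
  (step A T eta u1 u2 st).2 = (3 * n + 6 * d + 1)%N.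
Proof.
case: st => [[w y] s]; rewrite /step /=.
rewrite !(@cost_loop _ _ _ _ 1%N) // !muln1. lia.
Qed.

Lemma cost_perceptron (R : realType) n d (A : 'M[R]_(n, d)) eps u1 u2 :
  running_time A eps u1 u2 = (1 + n + 3 * d + Tn n eps * (3 * n + 6 * d + 1))%N.
Proof.
rewrite /running_time /perceptron !cost_bind /=.
rewrite !(@cost_loop _ _ (fun (j : nat) (y : nat -> R) => tick (upd y j 0)) _ 1%N) //.
rewrite (@cost_loop _ _ (fun (j : nat) (y : nat -> R) => tick (upd y j 1)) _ 1%N) //.
rewrite (@cost_loop _ _ (fun (j : nat) (xb : nat -> R) => tick _) _ 1%N) //.
rewrite (@cost_loop _ _ _ _ (3 * n + 6 * d + 1)%N); last by move=> i st; exact: cost_step.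
rewrite !muln1. lia.
Qed.
Lemma Tn_le (R : realType) n (eps : R) :
  0 <= 200%:R ^+ 2 / eps ^+ 2 * ln (n%:R : R) ->
  (Tn n eps)%:R <= 200%:R ^+ 2 / eps ^+ 2 * ln (n%:R : R) + 1.
Proof.
move=> x0; rewrite /Tn natr_absz.
set x := _ * ln _ in x0 *.
have cg : 0 <= Num.ceil x by rewrite ceil_ge0; lra.
have -> : (`|Num.ceil x|%:~R : R) = (Num.ceil x)%:~R by rewrite -[in RHS](gez0_abs cg).
have := ceilB1_lt x; rewrite intrB /=. lra.
Qed.

Theorem mainTheorem1 (R : realType) :
  exists C : R, 0 < C /\
  forall (n d : nat) (A : 'M[R]_(n, d)) (eps : R) (u1 u2 : nat -> R),
    (2 <= n)%N -> 0 < eps <= 1 ->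
    (forall i, \sum_j A i j ^+ 2 <= 1) ->
    (forall t, 0 <= u1 t < 1) -> (forall t, 0 <= u2 t < 1) ->
    (iterations n eps)%:R <= C * eps ^-2 * ln (n%:R : R) /\
    (running_time A eps u1 u2)%:R <= C * eps ^-2 * (n + d)%:R * ln (n%:R : R).
Proof.
set c : R := ln 2%:R.
have c0 : 0 < c by apply: ln_gt0; rewrite ltr1n.
set k : R := 1 + c^-1.
set a : R := 200%:R ^+ 2.
have a0 : 0 <= a by rewrite /a exprn_ge0 // ler0n.
exists (10 * (a + 1) * k).
have k1 : 1 <= k by rewrite /k lerDl invr_ge0 ltW.
split; first by rewrite !mulr_gt0 // ?(lt_le_trans _ k1) //; lra.
move=> n d A eps u1 u2 n2 /andP[e0 e1] _ _ _.
have lnc : c <= ln (n%:R : R).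
  by rewrite /c ler_ln ?posrE ?ltr0n ?ler_nat //; lia.
have ei : 1 <= eps ^-2.
  rewrite invf_ge1 ?exprn_gt0 //.
  by rewrite expr_le1 // ltW.
set L := eps ^-2 * ln (n%:R : R).
have Lc : c <= L by rewrite /L -[c]mul1r ler_pM // ltW.
have kL : 1 + L <= k * L.
  rewrite /k mulrDl mul1r addrC lerD2l.
  by rewrite -(mulVf (lt0r_neq0 c0)) ler_wpM2l // invr_ge0 ltW.
set P := (a + 1) * (k * L).
have L0 : 0 <= L by apply: le_trans Lc; exact: ltW.
have TP : (Tn n eps)%:R <= P.
  have := @Tn_le R n eps.
  have -> : 200%:R ^+ 2 / eps ^+ 2 * ln (n%:R : R) = a * L by rewrite /L /a mulrA.
  move=> /(_ (mulr_ge0 a0 L0)) H; apply: le_trans H _.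
  rewrite /P mulrDl mul1r lerD // ?ler_wpM2l //; lra.
have P1 : 1 <= P.
  rewrite /P -[1]mul1r ler_pM //; lra.
have eC : forall X : R, 10 * (a + 1) * k * eps ^-2 * X * ln (n%:R : R) = 10 * P * X.
  by move=> X; rewrite /P /L; ring.
split.
  have := eC 1; rewrite !mulr1 => ->.
  rewrite /iterations; apply: le_trans TP _; lra.
rewrite eC cost_perceptron.
set N := (n + d)%N.
have N0 : 0 <= (N%:R : R) by rewrite ler0n.
apply: (@le_trans _ _ ((3 * N + Tn n eps * (7 * N))%N%:R)).
  rewrite ler_nat /N; apply: leq_add; first lia.
  by apply: leq_mul => //; lia.
rewrite natrD !natrM.
have T0 : 0 <= ((Tn n eps)%:R : R) by rewrite ler0n.
have h1 : (Tn n eps)%:R * (N%:R : R) <= P * N%:R by rewrite ler_wpM2r.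
have h2 : (N%:R : R) <= P * N%:R by rewrite -{1}[(N%:R : R)]mul1r ler_wpM2r.
rewrite -[(Tn n eps)%:R * _]mulrCA.
rewrite -mulrA; move: h1 h2; set t := (Tn n eps)%:R * _; set q := P * _; move: t q (N%:R : R) => t q z; lra.
Qed.
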